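(* Let $\alpha\in[0,1)$, let $n\geq f(\alpha)$, and let $s$ be an integer with $2\leq s\leq\frac{n-1}{3}$. Then $\rho_{\alpha}\big(K_s\vee(K_{n-3s+1}\cup (2s-1)K_1)\big)<\eta(n)$.
   Context: For a graph $G$, $A_{\alpha}(G)=\alpha D(G)+(1-\alpha)A(G)$ where $D(G)$ is the diagonal degree matrix and $A(G)$ the adjacency matrix, and $\rho_{\alpha}(G)$ is the largest eigenvalue of $A_{\alpha}(G)$. $\vee$ denotes join, $\cup$ disjoint union, $K_m$ the complete graph on $m$ vertices, $tK_1$ the edgeless graph on $t$ vertices. Define $f(\alpha)=14$ if $\alpha\in[0,\frac12]$, $f(\alpha)=17$ if $\alpha\in(\frac12,\frac23]$, $f(\alpha)=20$ if $\alpha\in(\frac23,\frac34]$, and $f(\alpha)=\frac{5}{1-\alpha}+1$ if $\alpha\in(\frac34,1)$. $\eta(n)$ is the largest root of $x^{3}-((\alpha+1)n+\alpha-4)x^{2}+(\alpha n^{2}+(\alpha^{2}-2\alpha-1)n-2\alpha+1)x-\alpha^{2}n^{2}+(5\alpha^{2}-3\alpha+2)n-10\alpha^{2}+15\alpha-8=0$. *)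

(* Defs.v *)
From mathcomp Require Import all_boot all_order all_algebra.
Set Implicit Arguments. Unset Strict Implicit. Unset Printing Implicit Defensive.
Import Order.TTheory GRing.Theory Num.Theory.
Local Open Scope ring_scope.

(* Simple graphs on vertex set 'I_n are given by a relation e : rel 'I_n
   (assumed symmetric and irreflexive where relevant). *)

Definition adjmx (R : rcfType) (n : nat) (e : rel 'I_n) : 'M[R]_n :=
  \matrix_(i, j) (e i j)%:R.

Definition degmx (R : rcfType) (n : nat) (e : rel 'I_n) : 'M[R]_n :=
  \matrix_(i, j) ((i == j)%:R * (#|[pred k | e i k]|)%:R).

Definition Aalpha (R : rcfType) (n : nat) (alpha : R) (e : rel 'I_n) : 'M[R]_n :=
  alpha *: degmx R e + (1 - alpha) *: adjmx R e.

Definition is_largest_eigenvalue (R : rcfType) (n : nat) (M : 'M[R]_n) (rho : R) :=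
  eigenvalue M rho /\ (forall mu : R, eigenvalue M mu -> mu <= rho).

Definition is_largest_root (R : rcfType) (p : {poly R}) (x : R) :=
  root p x /\ (forall y : R, root p y -> y <= x).

(* The graph K_s \/ (K_{n-3s+1} \cup (2s-1)K_1) on vertex set 'I_n:
   vertices 0..s-1 form K_s, vertices s..n-2s form K_{n-3s+1},
   vertices n-2s+1..n-1 are the (2s-1) isolated vertices of the union;
   every vertex of K_s is joined to every other vertex. *)
Definition join_graph (n s : nat) : rel 'I_n :=
  fun i j => (i != j) &&
    [|| (i < s)%N, (j < s)%N | ((i < n - 2 * s + 1)%N && (j < n - 2 * s + 1)%N)].

Definition fbound (R : rcfType) (alpha : R) : R :=
  if alpha <= 1/2 then 14
  else if alpha <= 2/3 then 17
  else if alpha <= 3/4 then 20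
  else 5 / (1 - alpha) + 1.

Definition eta_poly (R : rcfType) (alpha : R) (n : nat) : {poly R} :=
  let N : R := n%:R in
  'X^3
  - ((alpha + 1) * N + alpha - 4)%:P * 'X^2
  + (alpha * N ^+ 2 + (alpha ^+ 2 - 2 * alpha - 1) * N - 2 * alpha + 1)%:P * 'X
  + (- alpha ^+ 2 * N ^+ 2 + (5 * alpha ^+ 2 - 3 * alpha + 2) * N
     - 10 * alpha ^+ 2 + 15 * alpha - 8)%:P.

Arguments join_graph n s : clear implicits.
Arguments eta_poly {R} alpha n.

(* Main.v *)
Require Import Defs.
From mathcomp Require Import all_boot all_order all_algebra.
From mathcomp Require Import ring lra zify.
From Stdlib Require Import Classical.
Import Order.TTheory GRing.Theory Num.Theory.
Local Open Scope ring_scope.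
Definition hA {R : rcfType} (e d : R) : R :=
  4*e*d^+2 + 47/4*e*d + 15/2*e + 4*d^+3 + 77/4*d^+2 + 99/4*d + 9/2.
Definition hB {R : rcfType} (e d : R) : R :=
  2*e^+2*d + 3/4*e^+2 + 8*e*d^+2 + 57/4*e*d + 9/16*e + 8*d^+3 + 21*d^+2 + 4*d - 75/16.
Definition hC {R : rcfType} (e d : R) : R :=
  - (9/2*e*d) - 27/16*e - 9*d^+2 - 45/4*d - 189/64.

Lemma hcore (R : rcfType) (u e d : R) : 0 < u -> 0 <= d -> 0 <= e -> 7 <= 3*d + e ->
  19/4 <= u*(6+3*d+e) -> 0 < hA e d * u^+2 + hB e d * u + hC e d.
Proof.
move=> u0 d0 e0 F K.
have E : forall k : nat, forall l : nat, 0 <= e ^+ k * d ^+ l.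
  by move=> k l; apply: mulr_ge0; apply: exprn_ge0.
have hA0 : 0 <= hA e d.
  rewrite /hA.
  have := E 1%N 1%N; have := E 1%N 2%N; have := E 0%N 2%N; have := E 0%N 3%N.
  rewrite !expr0 !expr1 !mul1r. lra.
have hB0 : 0 <= hB e d.
  rewrite /hB.
  have := E 1%N 1%N; have := E 1%N 2%N; have := E 0%N 2%N; have := E 0%N 3%N;
  have := E 2%N 1%N.
  rewrite !expr0 !expr1 !mul1r.
  have sq : 49 <= e^+2 + 6 * (e*d) + 9 * d^+2.
    have : 0 <= (3*d+e-7)*(3*d+e+7) by apply: mulr_ge0; lra.
    rewrite !expr2. lra.
  rewrite !expr2. lra.
set w := 6 + 3*d + e.
have w0 : 0 < w by rewrite /w; lra.
have G0 : 0 < hA e d * (19/4)^+2 + hB e d * (19/4) * w + hC e d * w^+2.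
  have -> : hA e d * (19/4)^+2 + hB e d * (19/4) * w + hC e d * w^+2 =
    5*(e^+3*d^+1) + 15/8*(e^+3*d^+0) + 61/2*(e^+2*d^+2) + 60*(e^+2*d^+1) + 27/32*(e^+2*d^+0)
    + 115/2*(e^+1*d^+3) + 2147/8*(e^+1*d^+2) + 10329/32*(e^+1*d^+1) + 4275/64*e
    + 33*(e^+0*d^+4) + 769/4*(e^+0*d^+3) + 1337/4*(e^+0*d^+2) + 1509/16*d - 1107/8.
    rewrite /hA /hB /hC /w. field; lra.
  have := E 3%N 1%N; have := E 3%N 0%N; have := E 2%N 2%N; have := E 2%N 1%N;
  have := E 2%N 0%N; have := E 1%N 3%N; have := E 1%N 2%N; have := E 1%N 1%N;
  have := E 0%N 4%N; have := E 0%N 3%N; have := E 0%N 2%N.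
  lra.
have uw : 19/4 <= u * w by [].
have p1 : 0 <= hA e d * ((u*w - 19/4) * (u*w + 19/4)).
  apply: mulr_ge0 => //; apply: mulr_ge0; lra.
have p2 : 0 <= hB e d * w * (u*w - 19/4).
  apply: mulr_ge0; [apply: mulr_ge0 => //; lra | lra].
have : 0 < w^+2 * (hA e d * u^+2 + hB e d * u + hC e d).
  have -> : w^+2 * (hA e d * u^+2 + hB e d * u + hC e d) =
    hA e d * ((u*w - 19/4) * (u*w + 19/4)) + hB e d * w * (u*w - 19/4) +
    (hA e d * (19/4)^+2 + hB e d * (19/4) * w + hC e d * w^+2) by field; lra.
  by apply: ltr_wpDl; [exact: addr_ge0 | exact: G0].
by rewrite pmulr_rgt0 // exprn_gt0.
Qed.

Definition phi {R : rcfType} (a N S x : R) : R :=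
  (x - (a*(N-1) + (1-a)*(S-1))) * (x - (a*(N-2*S) + (1-a)*(N-3*S))) * (x - a*S)
  - ((1-a)*(N-3*S+1)) * ((1-a)*S) * (x - a*S)
  - ((1-a)*(2*S-1)) * ((1-a)*S) * (x - (a*(N-2*S) + (1-a)*(N-3*S))).

Definition etaf {R : rcfType} (a N x : R) : R :=
  x^+3 - ((a + 1) * N + a - 4) * x^+2
  + (a * N ^+ 2 + (a ^+ 2 - 2 * a - 1) * N - 2 * a + 1) * x
  + (- a ^+ 2 * N ^+ 2 + (5 * a ^+ 2 - 3 * a + 2) * N - 10 * a ^+ 2 + 15 * a - 8).

Lemma phi_r (R : rcfType) (a N S : R) : 0 <= a -> a < 1 -> 14 <= N ->
  19/4 <= (1-a)*(N-1) -> 2 <= S -> 3*S <= N-1 -> 0 < phi a N S (N - 13/4).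
Proof.
move=> a0 a1 N14 K S2 S3.
have -> : phi a N S (N - 13/4) = hA (N-3*S-1) (S-2) * (1-a)^+2 + hB (N-3*S-1) (S-2) * (1-a)
   + hC (N-3*S-1) (S-2).
  rewrite /phi /hA /hB /hC. field; lra.
apply: hcore; try lra.
Qed.

Lemma phi_b22 (R : rcfType) (a N S : R) : a < 1 -> 2 <= S -> 3*S <= N-1 ->
  phi a N S (a*(N-2*S) + (1-a)*(N-3*S)) < 0.
Proof.
move=> a1 S2 S3.
have -> : phi a N S (a*(N-2*S) + (1-a)*(N-3*S)) =
  - (((1-a)*(N-3*S+1)) * ((1-a)*S) * (N - 3*S)).
  rewrite /phi. field; lra.
rewrite oppr_lt0; apply: mulr_gt0; last lra.
by apply: mulr_gt0; apply: mulr_gt0; lra.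
Qed.

Lemma eta_r (R : rcfType) (a N : R) : 0 <= a -> a < 1 -> 14 <= N ->
  19/4 <= (1-a)*(N-1) -> etaf a N (N - 13/4) < 0.
Proof.
move=> a0 a1 N14 K.
set u := 1 - a.
have -> : etaf a N (N - 13/4) = - (N * (u * N / 4 - (9/16 - 15/16*u + 7/4*u^+2)))
   + (-153/64 + 145/16*u - 10*u^+2).
  rewrite /etaf /u. field; lra.
have u0 : 0 < u by rewrite /u; lra.
have u1 : u <= 1 by rewrite /u; lra.
have uN : 19/4 + u <= u * N.
  have -> : u * N = u * (N - 1) + u by field; lra.
  rewrite /u; lra.
have uu : u^+2 <= u by rewrite expr2 ler_piMl //; lra.
have h1 : 0 <= N * (u * N / 4 - (9/16 - 15/16*u + 7/4*u^+2)).
  apply: mulr_ge0; lra.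
have h2 : -153/64 + 145/16*u - 10*u^+2 < 0.
  have : 0 <= (u - 29/64)^+2 by exact: sqr_ge0.
  rewrite !expr2. nra.
lra.
Qed.

Lemma eta_2N (R : rcfType) (a N : R) : 0 <= a -> a < 1 -> 14 <= N ->
  0 <= etaf a N (2 * N).
Proof.
move=> a0 a1 N14.
have -> : etaf a N (2*N) = N^+3 * (4 - 2*a) + N^+2 * (14 - 8*a + a^+2)
  + N * (4 - 7*a + 5*a^+2) + (-8 + 15*a - 10*a^+2).
  rewrite /etaf. field; lra.
have aa : a^+2 <= a by rewrite expr2 ler_piMl //; lra.
have aa0 : 0 <= a^+2 by exact: sqr_ge0.
have N2 : 14 * N <= N^+2 by rewrite expr2; apply: ler_wpM2r; lra.
have N3 : 14 * N^+2 <= N^+3 by rewrite exprS; apply: ler_wpM2r; [exact: sqr_ge0 | lra].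
have t1 : 2 * N^+3 <= N^+3 * (4 - 2*a) by rewrite mulrC; apply: ler_wpM2l; [apply: exprn_ge0; lra | lra].
have t2 : 0 <= N^+2 * (14 - 8*a + a^+2) by apply: mulr_ge0; lra.
have t3 : 0 <= N * (4 - 7*a + 5*a^+2).
  apply: mulr_ge0; first lra.
  have : 0 <= (a - 7/10)^+2 by exact: sqr_ge0.
  rewrite !expr2. nra.
lra.
Qed.
Lemma largest_root_ex (R : rcfType) (k : nat) : forall (p : {poly R}), (size p <= k)%N ->
  p != 0 -> forall x0, root p x0 -> exists x, is_largest_root p x /\ x0 <= x.
Proof.
elim: k => [|k IH] p sp p0 x0 rx0.
  by move: p0; rewrite -size_poly_eq0; move: sp; rewrite leqn0 => ->.
case: (classic (forall y, root p y -> y <= x0)) => [H|H].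
  by exists x0; split; [split|].
have [y ry yx] : exists2 y, root p y & x0 < y.
  apply: NNPP => C; apply: H => y ry; rewrite leNgt; apply/negP => xy.
  by apply: C; exists y.
have /factor_theorem [q pq] := rx0.
have q0 : q != 0 by apply: contraNneq p0 => q0; rewrite pq q0 mul0r.
have sq : (size q <= k)%N.
  move: sp; rewrite pq size_Mmonic ?monicXsubC // ?size_XsubC ?addn2 //.
have rqy : root q y.
  move: ry; rewrite /root pq hornerM hornerXsubC mulf_eq0 => /orP [] // /eqP.
  by move=> h; move: yx; rewrite -subr_gt0 h ltxx.
have [m [[rm mmax] ym]] := IH q sq q0 y rqy.
exists m; split; last by apply: le_trans (ltW yx) ym.
split.
  by rewrite /root pq hornerM (eqP rm) mul0r.
move=> z; rewrite /root pq hornerM mulf_eq0 => /orP [rz|].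
  exact: mmax.
rewrite hornerXsubC subr_eq0 => /eqP ->.
by apply: le_trans (ltW yx) ym.
Qed.
Lemma perron_bound (R : rcfType) (n : nat) (A : 'M[R]_n) (x : 'rV[R]_n) (rho : R) :
  (forall i j, 0 <= A i j) -> (forall i, 0 < x 0 i) -> x *m A = rho *: x ->
  forall mu, eigenvalue A mu -> mu <= rho.
Proof.
move=> A0 xpos xA mu /eigenvalueP [v vA v0].
have [k vk] : exists k, v 0 k != 0.
  case: (pickP (fun k => v 0 k != 0)) => [k vk|H]; first by exists k.
  case/negP: v0; apply/eqP/rowP => i; rewrite mxE.
  by have := H i; rewrite /= => /negbFE/eqP.
pose w i := `|v 0 i| / x 0 i.
case: (@arg_maxP _ _ _ k xpredT w isT) => j _ Hj.
have wk : 0 < w k by rewrite /w divr_gt0 // normr_gt0.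
have wj : 0 < w j by apply: lt_le_trans wk (Hj k isT).
have vjx : `|v 0 j| = w j * x 0 j by rewrite /w divfK // gt_eqF.
have vj0 : 0 < `|v 0 j| by rewrite vjx mulr_gt0.
have E1 : mu * v 0 j = \sum_i v 0 i * A i j.
  by have := congr1 (fun M : 'M[R]_(1,n) => M 0 j) vA; rewrite !mxE => <-.
have E2 : \sum_i x 0 i * A i j = rho * x 0 j.
  by have := congr1 (fun M : 'M[R]_(1,n) => M 0 j) xA; rewrite !mxE.
have : `|mu| * `|v 0 j| <= rho * `|v 0 j|.
  rewrite -normrM E1.
  apply: le_trans (ler_norm_sum _ _ _) _.
  apply: (@le_trans _ _ (\sum_i w j * (x 0 i * A i j))).
    apply: ler_sum => i _; rewrite normrM (ger0_norm (A0 i j)) mulrA.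
    apply: ler_wpM2r => //.
    have -> : `|v 0 i| = w i * x 0 i by rewrite /w divfK // gt_eqF.
    by apply: ler_wpM2r; [exact: ltW | exact: Hj].
  by rewrite -mulr_sumr E2 vjx mulrCA.
rewrite ler_pM2r // => H.
exact: le_trans (ler_norm _) H.
Qed.
Definition cfun (s L p q : nat) : bool := [|| (p < s)%N, (q < s)%N | (p < L)%N && (q < L)%N].
Definition Xf {R : rcfType} (s L : nat) (x1 x2 x3 : R) (p : nat) : R :=
  if (p < s)%N then x1 else if (p < L)%N then x2 else x3.

Lemma sum3 (R : rcfType) (n s L : nat) (F : nat -> R) : (s <= L)%N -> (L <= n)%N ->
  \sum_(i < n) F i = \sum_(0 <= i < s) F i + \sum_(s <= i < L) F i + \sum_(L <= i < n) F i.
Proof.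
move=> sL Ln.
rewrite -(big_mkord xpredT) (big_cat_nat (n:=L)) //=.
by rewrite (big_cat_nat (n:=s)).
Qed.

Lemma sumc (R : rcfType) (n s L : nat) (x1 x2 x3 : R) (q : nat) : (s <= L)%N -> (L <= n)%N ->
  \sum_(i < n) Xf s L x1 x2 x3 i * (cfun s L i q)%:R
  = s%:R * x1 + (L - s)%:R * (x2 * ((q < L)%N)%:R) + (n - L)%:R * (x3 * ((q < s)%N)%:R).
Proof.
move=> sL Ln.
rewrite (@sum3 R n s L (fun i => Xf s L x1 x2 x3 i * (cfun s L i q)%:R) sL Ln).
congr (_ + _ + _).
- rewrite (eq_big_nat _ _ (F2 := fun=> x1)); first by rewrite sumr_const_nat subn0 mulr_natl.
  by move=> i /andP [_ iS]; rewrite /Xf /cfun iS /= mulr1.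
- rewrite (eq_big_nat _ _ (F2 := fun=> x2 * ((q < L)%N)%:R)); first by rewrite sumr_const_nat mulr_natl.
  move=> i /andP [si iL]; rewrite /Xf /cfun ltnNge si iL /=.
  case: (ltnP q s) => qs //=.
  by rewrite (leq_trans qs sL).
- rewrite (eq_big_nat _ _ (F2 := fun=> x3 * ((q < s)%N)%:R)); first by rewrite sumr_const_nat mulr_natl.
  move=> i /andP [Li _]; rewrite /Xf /cfun.
  have -> : (i < s)%N = false by apply/negbTE; rewrite -leqNgt (leq_trans sL Li).
  have -> : (i < L)%N = false by apply/negbTE; rewrite -leqNgt.
  by rewrite /= orbF.
Qed.

Lemma sum_diag (R : rcfType) (n : nat) (j : 'I_n) (G : 'I_n -> R) :
  \sum_(i < n) (i == j)%:R * G i = G j.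
Proof.
rewrite (bigD1 j) //= eqxx mul1r big1 ?addr0 // => i /negbTE ->.
by rewrite mul0r.
Qed.

Lemma natb_andN (R : rcfType) (b c : bool) :
  ((~~ b) && c)%:R = c%:R - b%:R * c%:R :> R.
Proof. by case: b; case: c; rewrite /= ?mul1r ?mul0r ?subrr ?subr0. Qed.

Lemma cfun_sym s L p q : cfun s L p q = cfun s L q p.
Proof. by rewrite /cfun; case: (p < s)%N; case: (q < s)%N; case: (p < L)%N; case: (q < L)%N. Qed.
Lemma cfun_diag s L p : (s <= L)%N -> cfun s L p p = (p < L)%N.
Proof.
move=> sL; rewrite /cfun andbb orbA orbb.
by case: (ltnP p s) => ps //=; rewrite (leq_trans ps sL).
Qed.

Lemma join_graphE n s (i j : 'I_n) :
  join_graph n s i j = (~~ (i == j)) && cfun s (n - 2*s + 1) i j.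
Proof. by []. Qed.

Lemma deg_join (R : rcfType) (n s : nat) (j : 'I_n) :
  (s <= n - 2*s + 1)%N -> (n - 2*s + 1 <= n)%N ->
  (#|[pred k | join_graph n s j k]|)%:R =
   s%:R + (n - 2*s + 1 - s)%:R * ((j < n - 2*s + 1)%N)%:R + (n - (n - 2*s + 1))%:R * ((j < s)%N)%:R
   - ((j < n - 2*s + 1)%N)%:R :> R.
Proof.
move=> sL Ln.
have -> : #|[pred k | join_graph n s j k]| = \sum_k (join_graph n s j k : nat).
  rewrite -sum1_card big_mkcond /=; apply: eq_bigr => k _.
  by rewrite inE; case: (join_graph _ _ _ _).
rewrite natr_sum.
under eq_bigr => k _ do rewrite join_graphE natb_andN cfun_sym.
rewrite sumrB.
have -> : \sum_(i < n) ((j == i)%:R * (cfun s (n - 2 * s + 1) i j)%:R) = ((j < n - 2*s + 1)%N)%:R :> R.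
  under eq_bigr => i _ do rewrite eq_sym.
  by rewrite sum_diag cfun_diag.
have -> : \sum_(i < n) (cfun s (n - 2 * s + 1) i j)%:R =
   \sum_(i < n) Xf s (n - 2*s + 1) (1:R) 1 1 i * (cfun s (n - 2 * s + 1) i j)%:R.
  by apply: eq_bigr => i _; rewrite /Xf; case: ifP => _; [|case: ifP => _]; rewrite mul1r.
rewrite sumc //. by rewrite !mulr1 !mul1r.
Qed.

Lemma join_eig (R : rcfType) (n s : nat) (alpha rho x1 x2 x3 : R) :
  (s <= n - 2*s + 1)%N -> (n - 2*s + 1 <= n)%N ->
  alpha * (x1 * (s%:R + (n - 2*s + 1 - s)%:R + (n - (n - 2*s + 1))%:R - 1))
    + (1 - alpha) * (s%:R * x1 + (n - 2*s + 1 - s)%:R * x2 + (n - (n - 2*s + 1))%:R * x3 - x1)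
    = rho * x1 ->
  alpha * (x2 * (s%:R + (n - 2*s + 1 - s)%:R - 1))
    + (1 - alpha) * (s%:R * x1 + (n - 2*s + 1 - s)%:R * x2 - x2) = rho * x2 ->
  alpha * (x3 * s%:R) + (1 - alpha) * (s%:R * x1) = rho * x3 ->
  (\row_(j < n) Xf s (n - 2*s + 1) x1 x2 x3 j) *m Aalpha alpha (join_graph n s)
   = rho *: (\row_(j < n) Xf s (n - 2*s + 1) x1 x2 x3 j).
Proof.
move=> sL Ln H1 H2 H3.
apply/rowP => j; rewrite !mxE.
set L := (n - 2*s + 1)%N.
set X := Xf s L x1 x2 x3.
have step : forall i : 'I_n,
  (\row_(j0 < n) X j0) 0 i * Aalpha alpha (join_graph n s) i j =
  alpha * ((i == j)%:R * (X i * (#|[pred k | join_graph n s i k]|)%:R))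
  + (1 - alpha) * (X i * (cfun s L i j)%:R)
  - (1 - alpha) * ((i == j)%:R * (X i * (cfun s L i j)%:R)).
  move=> i; rewrite /Aalpha /degmx /adjmx !mxE join_graphE natb_andN.
  rewrite -/L; ring.
rewrite (eq_bigr _ (fun i _ => step i)) sumrB big_split /= -!mulr_sumr !sum_diag.
rewrite cfun_diag // deg_join // sumc // -/L.
rewrite /X /Xf.
case: (ltnP j s) => js.
  have jL : (j < L)%N by apply: leq_trans js sL.
  rewrite jL /= -H1; ring.
case: (ltnP j L) => jL /=.
  rewrite -H2; ring.
rewrite -H3; ring.
Qed.

Lemma eqn1 (R : rcfType) (a N S rho : R) :
  let b22 := a*(N-2*S) + (1-a)*(N-3*S) in let b33 := a*S in
  let x1 := (rho - b22) * (rho - b33) in let x2 := ((1-a)*S)*(rho - b33) in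
  let x3 := ((1-a)*S)*(rho-b22) in
  a * (x1 * (S + (N - 3 * S + 1) + (2 * S - 1) - 1)) +
  (1 - a) * (S * x1 + (N - 3 * S + 1) * x2 + (2 * S - 1) * x3 - x1) - rho * x1 = - phi a N S rho.
Proof. rewrite /phi /=; ring. Qed.
Lemma eqn2 (R : rcfType) (a N S rho : R) :
  let b22 := a*(N-2*S) + (1-a)*(N-3*S) in let b33 := a*S in
  let x1 := (rho - b22) * (rho - b33) in let x2 := ((1-a)*S)*(rho - b33) in
  a * (x2 * (S + (N - 3 * S + 1) - 1)) +
  (1 - a) * (S * x1 + (N - 3 * S + 1) * x2 - x2) = rho * x2.
Proof. rewrite /=; ring. Qed.
Lemma eqn3 (R : rcfType) (a N S rho : R) :
  let b22 := a*(N-2*S) + (1-a)*(N-3*S) in let b33 := a*S in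
  let x1 := (rho - b22) * (rho - b33) in
  let x3 := ((1-a)*S)*(rho-b22) in
  a * (x3 * S) + (1 - a) * (S * x1) = rho * x3.
Proof. rewrite /=; ring. Qed.

Theorem mainTheorem5 (R : rcfType) (alpha : R) (n s : nat) :
  0 <= alpha -> alpha < 1 ->
  fbound alpha <= n%:R ->
  (2 <= s)%N -> (3 * s <= n - 1)%N ->
  exists rho : R, is_largest_eigenvalue (Aalpha alpha (join_graph n s)) rho /\
  exists eta : R, is_largest_root (eta_poly alpha n) eta /\ rho < eta.
Proof.
move=> a0 a1 hf s2 s3.
set a := alpha in a0 a1 hf *.
set N : R := n%:R.
set S : R := s%:R.
have hN : 14 <= N /\ 19/4 <= (1-a)*(N-1).
  move: hf; rewrite /fbound -/N.
  have pm : forall u0 M0 : R, 0 <= u0 -> 0 <= M0 -> u0 <= 1 - a -> M0 <= N - 1 ->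
      u0 * M0 <= (1 - a) * (N - 1).
    by move=> u0 M0 h0 h0' hu hM; apply: ler_pM.
  case: ifP => h1; first by move=> hf; split; [lra | apply: le_trans (pm (1/2) 13 _ _ _ _); lra].
  case: ifP => h2; first by move=> hf; split; [lra | apply: le_trans (pm (1/3) 16 _ _ _ _); lra].
  case: ifP => h3; first by move=> hf; split; [lra | apply: le_trans (pm (1/4) 19 _ _ _ _); lra].
  move=> hf.
  have u0 : 0 < 1 - a by lra.
  have a34 : 3/4 < a by move: h3 => /negbT; rewrite -ltNge.
  have K : 5 <= (N - 1) * (1 - a).
    by rewrite -ler_pdivrMr //; lra.
  split; last by lra.
  have : 5 / (1 - a) >= 20.
    rewrite ler_pdivlMr //; lra.
  lra.
case: hN => N14 K.
have hS2 : 2 <= S by rewrite /S (ler_nat R 2 s).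
have hn1 : (1 <= n)%N by lia.
have hS3 : 3 * S <= N - 1.
  have h : (3 * s + 1 <= n)%N by lia.
  have := (ler_nat R (3*s+1) n); rewrite h natrD natrM => /esym H.
  rewrite /S /N; lra.
have sL : (s <= n - 2*s + 1)%N by lia.
have Ln : (n - 2*s + 1 <= n)%N by lia.
have eLs : ((n - 2*s + 1 - s)%N%:R : R) = N - 3*S + 1.
  have h : (n - 2*s + 1 - s + 3 * s = n + 1)%N by lia.
  have := congr1 (fun m : nat => m%:R : R) h; rewrite /= !natrD -/N -/S.
  move=> H; lra.
have enL : ((n - (n - 2*s + 1))%N%:R : R) = 2*S - 1.
  have h : (n - (n - 2*s + 1) + 1 = 2 * s)%N by lia.
  have := congr1 (fun m : nat => m%:R : R) h; rewrite /= !natrD -/N -/S.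
  move=> H; lra.
(* the quotient cubic *)
set b22 := a*(N-2*S) + (1-a)*(N-3*S).
set b33 := a*S.
pose PhiP : {poly R} :=
  ('X - (a*(N-1) + (1-a)*(S-1))%:P) * ('X - b22%:P) * ('X - b33%:P)
  - (((1-a)*(N-3*S+1)) * ((1-a)*S))%:P * ('X - b33%:P)
  - (((1-a)*(2*S-1)) * ((1-a)*S))%:P * ('X - b22%:P).
have PhiE : forall x, PhiP.[x] = phi a N S x.
  by move=> x; rewrite /PhiP /phi !hornerE.
have b22r : b22 <= N - 13/4.
  rewrite /b22; have : a * S <= S by rewrite ler_piMl //; lra.
  move=> h; have -> : a*(N-2*S) + (1-a)*(N-3*S) = N - 3*S + a*S by ring.
  lra.
have [rho /andP [rho1 rho2] rootrho] : exists2 rho, b22 <= rho <= N - 13/4 & root PhiP rho.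
  apply: poly_ivt => //.
  rewrite !PhiE; apply/andP; split.
    exact: ltW (phi_b22 _ _ _ _ a1 hS2 hS3).
  exact: ltW (phi_r _ _ _ _ a0 a1 N14 K hS2 hS3).
have phirho : phi a N S rho = 0 by rewrite -PhiE; apply/eqP.
have rhob22 : b22 < rho.
  rewrite lt_neqAle rho1 andbT; apply/eqP => E.
  by have := phi_b22 _ _ _ _ a1 hS2 hS3; rewrite -/b22 E phirho ltxx.
have b33b22 : b33 < b22.
  rewrite /b33 /b22; have -> : a*(N-2*S) + (1-a)*(N-3*S) = N - 3*S + a*S by ring.
  lra.
pose x1 := (rho - b22) * (rho - b33).
pose x2 := ((1-a)*S) * (rho - b33).
pose x3 := ((1-a)*S) * (rho - b22).
have x1p : 0 < x1 by apply: mulr_gt0; lra.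
have x2p : 0 < x2 by apply: mulr_gt0; [apply: mulr_gt0|]; lra.
have x3p : 0 < x3 by apply: mulr_gt0; [apply: mulr_gt0|]; lra.
pose x := \row_(j < n) Xf s (n - 2*s + 1) x1 x2 x3 j.
have J := @join_eig R n s a rho x1 x2 x3 sL Ln.
rewrite eLs enL -/S in J.
have H1 : a * (x1 * (S + (N - 3 * S + 1) + (2 * S - 1) - 1)) +
  (1 - a) * (S * x1 + (N - 3 * S + 1) * x2 + (2 * S - 1) * x3 - x1) = rho * x1.
  apply/eqP; rewrite -subr_eq0; apply/eqP.
  transitivity (- phi a N S rho); last by rewrite phirho oppr0.
  exact: (@eqn1 R a N S rho).
have H2 : a * (x2 * (S + (N - 3 * S + 1) - 1)) +
  (1 - a) * (S * x1 + (N - 3 * S + 1) * x2 - x2) = rho * x2.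
  exact: (@eqn2 R a N S rho).
have H3 : a * (x3 * S) + (1 - a) * (S * x1) = rho * x3.
  exact: (@eqn3 R a N S rho).
have xA : x *m Aalpha a (join_graph n s) = rho *: x := J H1 H2 H3.
clear J H1 H2 H3.
have xpos : forall i, 0 < x 0 i.
  by move=> i; rewrite mxE /Xf; case: ifP => _ //; case: ifP.
have A0 : forall i j, 0 <= Aalpha a (join_graph n s) i j.
  move=> i j; rewrite /Aalpha /degmx /adjmx !mxE.
  apply: addr_ge0; apply: mulr_ge0; rewrite ?mulr_ge0 ?ler0n ?subr_ge0 ?(ltW a1) //.
have eigrho : eigenvalue (Aalpha a (join_graph n s)) rho.
  apply/eigenvalueP; exists x => //.
  have i0 : 'I_n := Ordinal hn1.
  apply/eqP => x0; have := xpos i0; rewrite x0 mxE ltxx //.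
exists rho; split.
  split => //; exact: perron_bound A0 xpos xA.
have etaE : forall y, (eta_poly a n).[y] = etaf a N y.
  by move=> y; rewrite /eta_poly /etaf !hornerE.
have [y /andP [y1 y2] rooty] : exists2 y, N - 13/4 <= y <= 2 * N & root (eta_poly a n) y.
  apply: poly_ivt; first lra.
  rewrite !etaE; apply/andP; split.
    exact: ltW (eta_r _ _ _ a0 a1 N14 K).
  exact: eta_2N _ _ _ a0 a1 N14.
have etay : etaf a N y = 0 by rewrite -etaE; apply/eqP.
have yr : N - 13/4 < y.
  rewrite lt_neqAle y1 andbT; apply/eqP => E.
  by have := eta_r _ _ _ a0 a1 N14 K; rewrite E etay ltxx.
have p0 : eta_poly a n != 0.
  apply/eqP => P0; have := eta_r _ _ _ a0 a1 N14 K.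
  by rewrite -etaE P0 horner0 ltxx.
have [eta [Heta yeta]] := @largest_root_ex R _ _ (leqnn _) p0 _ rooty.
exists eta; split => //.
lra.
Qed.
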